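(* For every $\lambda\in\mathcal{R}$ and every convex overmarked box $\Theta$, the pair $(\pi(A_\Theta),\pi(B^\lambda_\Theta))$ (i.e. the representation $\rho^\lambda_\Theta$) is a smooth point of the real algebraic variety $\mathrm{Hom}(\Gamma_o,\mathrm{SL}(3,\mathbb{R}))=\{(A,B)\in\mathrm{SL}(3,\mathbb{R})^2: A^3=B^3=\mathrm{Id}\}$.
   Context: $\Gamma_o=\langle a,b\mid a^3=b^3=1\rangle$ (the index-2 subgroup of $\mathrm{PSL}(2,\mathbb{Z})$ generated by $R$ and $IRI$), and $\mathrm{PGL}(3,\mathbb{R})$ is identified with $\mathrm{SL}(3,\mathbb{R})$ via $\pi:\mathrm{GL}(3,\mathbb{R})\to\mathrm{SL}(3,\mathbb{R})$, $M\mapsto(\det M)^{-1/3}M$; a representation is identified with the pair of images of the generators, so $\mathrm{Hom}(\Gamma_o,\mathrm{SL}(3,\mathbb{R}))$ is the stated subvariety of $\mathrm{M}(3,\mathbb{R})^2$. A convex overmarked box $\Theta$ is determined, in a suitable basis, by parameters $(\zeta_t,\zeta_b)\in\,]-1,1[^2$ (namely, it consists of points $p=[-1:1:0]$, $q=[1:1:0]$, $r=[1:0:1]$, $s=[-1:0:1]$, $t=[\zeta_t:1:0]$, $b=[\zeta_b:0:1]$ and lines $P=ts$, $Q=tr$, $R=bq$, $S=bp$, $T=pq$, $B=rs$). Matrices: $A_\Theta=\begin{pmatrix}\zeta_t\zeta_b-1&\zeta_t(1-\zeta_t\zeta_b)&\zeta_b-\zeta_t\\ \zeta_b-\zeta_t&1-\zeta_t\zeta_b&\zeta_t\zeta_b-1\\0&1-\zeta_t^2&0\end{pmatrix}$,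 $D_\Theta=\begin{pmatrix}1&-\zeta_t&-\zeta_b\\-\zeta_t&1&\zeta_t\zeta_b\\-\zeta_b&\zeta_t\zeta_b&1\end{pmatrix}$, $\Sigma_{(\varepsilon,\delta)}=\begin{pmatrix}1&0&0\\0&e^{-\delta}\cosh\varepsilon&-\sinh\varepsilon\\0&-\sinh\varepsilon&e^{\delta}\cosh\varepsilon\end{pmatrix}$, and $B^\lambda_\Theta=\Sigma_\lambda^{-1}D_\Theta^{-1}\,{}^tA_\Theta^{-1}D_\Theta\Sigma_\lambda$. The representation $\rho^\lambda_\Theta$ corresponds to $(\pi(A_\Theta),\pi(B^\lambda_\Theta))$. $f(\varepsilon,\delta)=e^{-\delta}\cosh\varepsilon-\sinh\varepsilon-1$ and $\mathcal{R}=\{(\varepsilon,\delta):f(\varepsilon,\delta)\ge0,\ f(\varepsilon,-\delta)\ge0\}$. *)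

(* Defs.v *)
From mathcomp Require Import all_boot all_order all_algebra.
From mathcomp Require Import reals sequences exp.

Set Implicit Arguments.
Unset Strict Implicit.
Unset Printing Implicit Defensive.

Import Order.TTheory GRing.Theory Num.Theory.
From mathcomp Require Import mpoly.
Local Open Scope ring_scope.

Definition smooth_point (R : realType) (N : nat) (V : 'rV[R]_N -> Prop)
    (x : 'rV[R]_N) : Prop :=
  V x /\
  exists (c : nat) (f : 'I_c -> {mpoly R[N]}),
    [/\ (forall y, V y -> forall k, (f k).@[fun i => y 0 i] = 0),
        \rank (\matrix_(k < c, i < N) (mderiv i (f k)).@[fun j => x 0 j]) = c
      & exists2 eps : R, 0 < eps &
          forall y : 'rV[R]_N, (forall i, `|y 0 i - x 0 i| < eps) ->
            (V y <-> forall k, (f k).@[fun i => y 0 i] = 0)].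

Definition pair_coord (R : realType) (A B : 'M[R]_3) : 'rV[R]_(3 * 3 + 3 * 3) :=
  row_mx (mxvec A) (mxvec B).

Definition HomVar (R : realType) (y : 'rV[R]_(3 * 3 + 3 * 3)) : Prop :=
  exists A B : 'M[R]_3,
    [/\ y = pair_coord A B, \det A = 1, \det B = 1, A ^+ 3 = 1 & B ^+ 3 = 1].

Definition cbrt (R : realType) (x : R) : R := Num.sg x * powR `|x| 3^-1.

Definition piSL (R : realType) (M : 'M[R]_3) : 'M[R]_3 :=
  (cbrt (\det M))^-1 *: M.

Definition mx3 (R : realType) (a11 a12 a13 a21 a22 a23 a31 a32 a33 : R)
    : 'M[R]_3 :=
  \matrix_(i < 3, j < 3)
    nth 0 (nth [::] [:: [:: a11; a12; a13]; [:: a21; a22; a23];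
                        [:: a31; a32; a33]] i) j.

Definition coshR (R : realType) (x : R) : R := (expR x + expR (- x)) / 2.
Definition sinhR (R : realType) (x : R) : R := (expR x - expR (- x)) / 2.

Definition A_Theta (R : realType) (zt zb : R) : 'M[R]_3 :=
  mx3 (zt * zb - 1) (zt * (1 - zt * zb)) (zb - zt)
      (zb - zt)     (1 - zt * zb)        (zt * zb - 1)
      0             (1 - zt ^+ 2)        0.

Definition D_Theta (R : realType) (zt zb : R) : 'M[R]_3 :=
  mx3 1 (- zt) (- zb)
      (- zt) 1 (zt * zb)
      (- zb) (zt * zb) 1.

Definition Sigma (R : realType) (eps del : R) : 'M[R]_3 :=
  mx3 1 0 0
      0 (expR (- del) * coshR eps) (- sinhR eps)
      0 (- sinhR eps) (expR del * coshR eps).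

Definition B_Theta (R : realType) (zt zb eps del : R) : 'M[R]_3 :=
  invmx (Sigma eps del) *m invmx (D_Theta zt zb) *m invmx ((A_Theta zt zb)^T)
    *m D_Theta zt zb *m Sigma eps del.

Definition fR (R : realType) (eps del : R) : R :=
  expR (- del) * coshR eps - sinhR eps - 1.

Definition in_region (R : realType) (eps del : R) : Prop :=
  0 <= fR eps del /\ 0 <= fR eps (- del).

(* Main.v *)
Require Import Defs.
From mathcomp Require Import all_boot all_order all_algebra.
From mathcomp Require Import reals sequences exp.
From mathcomp Require Import mpoly.
From mathcomp Require Import ring lra.
From Stdlib Require Import FunctionalExtensionality.
Import Order.TTheory GRing.Theory Num.Theory.
Local Open Scope ring_scope.
Set Implicit Arguments.
Unset Strict Implicit.
Unset Printing Implicit Defensive.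


Section Ent.
Variable T : comNzRingType.
Definition mget (M : 'M[T]_3) (a b : nat) : T := M (inord a) (inord b).
Lemma mgetE (M : 'M[T]_3) i j : M i j = mget M i j.
Proof. by rewrite /mget !inord_val. Qed.
Definition detF (e : nat -> nat -> T) : T :=
  e 0 0 * e 1 1 * e 2 2 + e 0 1 * e 1 2 * e 2 0 + e 0 2 * e 1 0 * e 2 1
  - e 0 2 * e 1 1 * e 2 0 - e 0 1 * e 1 0 * e 2 2 - e 0 0 * e 1 2 * e 2 1.
Definition trF (e : nat -> nat -> T) : T := e 0 0 + e 1 1 + e 2 2.
Definition s2F (e : nat -> nat -> T) : T :=
  e 0 0 * e 1 1 - e 0 1 * e 1 0 + e 0 0 * e 2 2 - e 0 2 * e 2 0
  + e 1 1 * e 2 2 - e 1 2 * e 2 1.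
Definition trMF (e f : nat -> nat -> T) : T :=
  e 0 0 * f 0 0 + e 0 1 * f 1 0 + e 0 2 * f 2 0 +
  e 1 0 * f 0 1 + e 1 1 * f 1 1 + e 1 2 * f 2 1 +
  e 2 0 * f 0 2 + e 2 1 * f 1 2 + e 2 2 * f 2 2.
Definition sqF (e f : nat -> nat -> T) (a b : nat) : T :=
  e a 0 * f 0 b + e a 1 * f 1 b + e a 2 * f 2 b.
Definition q1F e := detF e - 1.
Definition q2F e := trF e ^+ 2 - trMF e e - trF e *+ 2.
Definition q3F e := trF e * (trF e - 3%:R).
Definition repl (e f : nat -> nat -> T) (r : nat) a b := if a == r then f a b else e a b.
Definition ddetF e f := detF (repl e f 0) + detF (repl e f 1) + detF (repl e f 2).

Lemma det3E (M : 'M[T]_3) : \det M = detF (mget M).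
Proof.
rewrite (expand_det_row _ ord0) !big_ord_recl big_ord0 /cofactor.
rewrite !(expand_det_row _ ord0) !big_ord_recl !big_ord0 /cofactor.
rewrite !(expand_det_row _ ord0) !big_ord_recl !big_ord0 /cofactor.
rewrite !det_mx00 !mxE !mgetE /= /detF /bump /=.
ring.
Qed.

Lemma tr3E (M : 'M[T]_3) : \tr M = trF (mget M).
Proof. by rewrite /mxtrace !big_ord_recl big_ord0 !mgetE /= /trF /bump /=; ring. Qed.

Lemma mgetM (M N : 'M[T]_3) a b : (a < 3)%N -> (b < 3)%N ->
  mget (M *m N) a b = sqF (mget M) (mget N) a b.
Proof.
move=> Ha Hb.
rewrite {1}/mget mxE !big_ord_recl big_ord0 /sqF !mgetE /= /bump /= !inordK //; ring.
Qed.
Lemma mgetZ c (M : 'M[T]_3) a b : mget (c *: M) a b = c * mget M a b.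
Proof. by rewrite /mget mxE. Qed.
Lemma mgetD (M N : 'M[T]_3) a b : mget (M + N) a b = mget M a b + mget N a b.
Proof. by rewrite /mget mxE. Qed.
Lemma mgetB (M N : 'M[T]_3) a b : mget (M - N) a b = mget M a b - mget N a b.
Proof. by rewrite /mget !mxE. Qed.
Lemma mget1 a b : (a < 3)%N -> (b < 3)%N -> mget (1%:M) a b = (a == b)%:R.
Proof.
move=> Ha Hb; rewrite /mget mxE; congr (_%:R).
by rewrite -val_eqE /= !inordK.
Qed.
Lemma mx3_eq (M N : 'M[T]_3) :
  (forall a b, (a < 3)%N -> (b < 3)%N -> mget M a b = mget N a b) -> M = N.
Proof. by move=> H; apply/matrixP => i j; rewrite !mgetE H. Qed.


Lemma CH3 (M : 'M[T]_3) :
  M *m M *m M = trF (mget M) *: (M *m M) - s2F (mget M) *: M + detF (mget M) *: 1%:M.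
Proof.
apply: mx3_eq => a b Ha Hb.
rewrite mgetD mgetB !mgetZ !mgetM // mget1 // /sqF !mgetM // /sqF.
case: a Ha => [|[|[|a]]] Ha //; case: b Hb => [|[|[|b]]] Hb //; rewrite /= /trF /s2F /detF; ring.
Qed.
End Ent.
Section Der.
Variable R : comNzRingType.
Variable n : nat.
Implicit Types p q : {mpoly R[n]}.
Definition Dv (x h : 'I_n -> R) p := \sum_(i < n) (mderiv i p).@[x] * h i.
Variables x h : 'I_n -> R.
Lemma DvD p q : Dv x h (p + q) = Dv x h p + Dv x h q.
Proof. by rewrite /Dv -big_split; apply: eq_bigr => i _; rewrite mderivD mevalD mulrDl. Qed.
Lemma DvN p : Dv x h (- p) = - Dv x h p.
Proof. by rewrite /Dv -sumrN; apply: eq_bigr => i _; rewrite mderivN mevalN mulNr. Qed.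
Lemma DvB p q : Dv x h (p - q) = Dv x h p - Dv x h q.
Proof. by rewrite DvD DvN. Qed.
Lemma DvM p q : Dv x h (p * q) = Dv x h p * q.@[x] + p.@[x] * Dv x h q.
Proof.
rewrite /Dv mulr_suml mulr_sumr -big_split /=; apply: eq_bigr => i _ /=.
rewrite mderivM mevalD !mevalM; ring.
Qed.
Lemma DvC c : Dv x h c%:MP = 0.
Proof. by rewrite /Dv big1 // => i _; rewrite mderivC meval0 mul0r. Qed.
Lemma Dv1 : Dv x h 1 = 0.
Proof. by rewrite -mpolyC1 DvC. Qed.
Lemma DvMn p k : Dv x h (p *+ k) = Dv x h p *+ k.
Proof. by rewrite /Dv -sumrMnl; apply: eq_bigr => i _; rewrite mderivMn mevalMn mulrnAl. Qed.
Lemma DvX j : Dv x h 'X_j = h j.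
Proof.
rewrite /Dv (bigD1 j) //= big1 ?addr0.
  have E : forall m : 'X_{1..n}, (m - m)%MM = 0%MM.
    by move=> m; apply/mnmP => k; rewrite mnmBE subnn mnm0E.
  by rewrite mderivX mnm1E eqxx E mpolyX0 mevalZ meval1 mulr1 mul1r.
move=> i /negbTE ne; rewrite mderivX mnm1E eq_sym ne scale0r meval0 mul0r //.
Qed.
End Der.

Section DerF.
Variable R : comNzRingType.
Variable n : nat.
Variables x h : 'I_n -> R.
Variable e : nat -> nat -> {mpoly R[n]}.
Let E := fun a b => (e a b).@[x].
Let H := fun a b => Dv x h (e a b).
Definition dq2F (E H : nat -> nat -> R) :=
  trF E * trF H *+ 2 - (trMF E H + trMF H E) - trF H *+ 2.
Definition dq3F (E H : nat -> nat -> R) := trF H * (trF E - 3%:R) + trF E * trF H.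
Lemma Dv_q1 : Dv x h (q1F e) = ddetF E H.
Proof.
rewrite /q1F /detF !(DvB, DvD, DvM, Dv1) !(mevalM) /ddetF /repl /detF /= /E /H; ring.
Qed.
Lemma Dv_q2 : Dv x h (q2F e) = dq2F E H.
Proof.
rewrite /q2F /trF /trMF !(DvB, DvD, DvM, DvMn, Dv1, expr2) !(mevalM, mevalD) /dq2F /trF /trMF /E /H; ring.
Qed.
Lemma Dv_q3 : Dv x h (q3F e) = dq3F E H.
Proof.
rewrite /q3F /trF !(DvB, DvD, DvM, DvMn, Dv1) !(mevalM, mevalD, mevalB, mevalMn, meval1) /dq3F /trF /E /H; ring.
Qed.
Lemma ev_q1 : (q1F e).@[x] = q1F E.
Proof. by rewrite /q1F /detF !(mevalB, mevalD, mevalM, meval1). Qed.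
Lemma ev_q2 : (q2F e).@[x] = q2F E.
Proof. by rewrite /q2F /trF /trMF !(mevalB, mevalD, mevalM, meval1, mevalMn, rmorphXn). Qed.
Lemma ev_q3 : (q3F e).@[x] = q3F E.
Proof. by rewrite /q3F /trF !(mevalB, mevalD, mevalM, meval1, mevalMn). Qed.
End DerF.

Section TrId.
Variable T : comNzRingType.
Implicit Types A H : 'M[T]_3.
Lemma trM_E A H : trMF (mget A) (mget H) = \tr (A *m H).
Proof. rewrite tr3E /trF !mgetM // /sqF /trMF; ring. Qed.
Lemma ddet_tr A H : ddetF (mget A) (mget H) =
  \tr (A *m A *m H) - \tr A * \tr (A *m H) + s2F (mget A) * \tr H.
Proof.
rewrite !tr3E /trF !mgetM // /sqF !mgetM // /sqF /ddetF /repl /detF /s2F /=; ring.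
Qed.
Lemma dq2_tr A H : dq2F (mget A) (mget H) = \tr A * \tr H *+ 2 - \tr (A *m H) *+ 2 - \tr H *+ 2.
Proof. by rewrite /dq2F -!trM_E !tr3E /trMF /trF; ring. Qed.
Lemma dq3_tr A H : dq3F (mget A) (mget H) = \tr H * (\tr A *+ 2 - 3%:R).
Proof. by rewrite /dq3F !tr3E /trF; ring. Qed.
Lemma tr2_E A : \tr (A *m A) = trF (mget A) ^+ 2 - s2F (mget A) *+ 2.
Proof. by rewrite -trM_E /trMF /trF /s2F; ring. Qed.
End TrId.

Section InC.
Variable R : realType.
Implicit Types N : 'M[R]_3.
Definition inC N := [/\ trF (mget N) = 0, s2F (mget N) = 0 & detF (mget N) = 1].
Lemma inC_cube N : inC N -> N *m N *m N = 1%:M.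
Proof. by case=> t s d; rewrite CH3 t s d !scale0r subr0 add0r scale1r. Qed.
Lemma inC_tr1 N : inC N -> \tr N = 0.
Proof. by case=> t _ _; rewrite tr3E. Qed.
Lemma inC_tr2 N : inC N -> \tr (N *m N) = 0.
Proof. by case=> t s _; rewrite tr2_E t s; ring. Qed.
Lemma inC_tr3 N : inC N -> \tr (N *m N *m N) = 3%:R.
Proof. by move=> /inC_cube ->; rewrite mxtrace1. Qed.
Lemma inC_tr4 N : inC N -> \tr (N *m N *m N *m N) = 0.
Proof. by move=> c; rewrite (inC_cube c) mul1mx (inC_tr1 c). Qed.
Definition H1 N := 3%:R^-1 *: N.
Definition H2 N := (- 6%:R^-1) *: (N *m N).
Definition H3 N := 9%:R^-1 *: (N *m N - 1%:M).
Lemma s2C N : inC N -> s2F (mget N) = 0. Proof. by case. Qed.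
Ltac trsimp c := rewrite ?ddet_tr ?dq2_tr ?dq3_tr /H1 /H2 /H3 ?(s2C c) ?(inC_tr1 c)
   ?(scalemxAr, mulmxBr, mulmxA, mulmx1, linearZ, linearB, mxtraceZ, mxtrace1) /=
   ?mulmxA ?mulmx1 ?mxtrace1 ?(inC_tr1 c, inC_tr2 c, inC_tr3 c, inC_tr4 c).
Lemma d11 N : inC N -> ddetF (mget N) (mget (H1 N)) = 1.
Proof. move=> c; trsimp c; field; rewrite ?pnatr_eq0 //=. Qed.
Lemma d12 N : inC N -> ddetF (mget N) (mget (H2 N)) = 0.
Proof. move=> c; trsimp c; field; rewrite ?pnatr_eq0 //=. Qed.
Lemma d13 N : inC N -> ddetF (mget N) (mget (H3 N)) = 0.
Proof. move=> c; trsimp c; field; rewrite ?pnatr_eq0 //=. Qed.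
Lemma d10 N : ddetF (mget N) (mget (0 : 'M[R]_3)) = 0.
Proof. by rewrite ?ddet_tr ?dq2_tr ?dq3_tr !(mulmx0, linear0); ring. Qed.
Lemma d21 N : inC N -> dq2F (mget N) (mget (H1 N)) = 0.
Proof. move=> c; trsimp c; field; rewrite ?pnatr_eq0 //=. Qed.
Lemma d22 N : inC N -> dq2F (mget N) (mget (H2 N)) = 1.
Proof. move=> c; trsimp c; field; rewrite ?pnatr_eq0 //=. Qed.
Lemma d23 N : inC N -> dq2F (mget N) (mget (H3 N)) = 0.
Proof. move=> c; trsimp c; field; rewrite ?pnatr_eq0 //=. Qed.
Lemma d20 N : dq2F (mget N) (mget (0 : 'M[R]_3)) = 0.
Proof. by rewrite ?ddet_tr ?dq2_tr ?dq3_tr !(mulmx0, linear0); ring. Qed.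
Lemma d31 N : inC N -> dq3F (mget N) (mget (H1 N)) = 0.
Proof. move=> c; trsimp c; field; rewrite ?pnatr_eq0 //=. Qed.
Lemma d32 N : inC N -> dq3F (mget N) (mget (H2 N)) = 0.
Proof. move=> c; trsimp c; field; rewrite ?pnatr_eq0 //=. Qed.
Lemma d33 N : inC N -> dq3F (mget N) (mget (H3 N)) = 1.
Proof. move=> c; trsimp c; field; rewrite ?pnatr_eq0 //=. Qed.
Lemma d30 N : dq3F (mget N) (mget (0 : 'M[R]_3)) = 0.
Proof. by rewrite ?ddet_tr ?dq2_tr ?dq3_tr !(mulmx0, linear0); ring. Qed.
End InC.

Section Main.
Variable R : realType.
Local Notation NN := (3 * 3 + 3 * 3)%N.
Definition idxA (a b : nat) : 'I_NN := lshift (3 * 3) (mxvec_index (inord a : 'I_3) (inord b : 'I_3)).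
Definition idxB (a b : nat) : 'I_NN := rshift (3 * 3) (mxvec_index (inord a : 'I_3) (inord b : 'I_3)).
Definition XA (a b : nat) : {mpoly R[NN]} := 'X_(idxA a b).
Definition XB (a b : nat) : {mpoly R[NN]} := 'X_(idxB a b).
Definition fpoly (k : 'I_6) : {mpoly R[NN]} :=
  nth 0 [:: q1F XA; q2F XA; q3F XA; q1F XB; q2F XB; q3F XB] k.
Lemma evfunA (A B : 'M[R]_3) : (fun a b => (XA a b).@[fun i => pair_coord A B 0 i]) = mget A.
Proof.
apply: FunctionalExtensionality.functional_extensionality => a.
apply: FunctionalExtensionality.functional_extensionality => b.
by rewrite /XA mevalXU /pair_coord /idxA row_mxEl mxvecE.
Qed.
Lemma evfunB (A B : 'M[R]_3) : (fun a b => (XB a b).@[fun i => pair_coord A B 0 i]) = mget B.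
Proof.
apply: FunctionalExtensionality.functional_extensionality => a.
apply: FunctionalExtensionality.functional_extensionality => b.
by rewrite /XB mevalXU /pair_coord /idxB row_mxEr mxvecE.
Qed.
Lemma dvfunA x (H K : 'M[R]_3) : (fun a b => Dv x (fun i => pair_coord H K 0 i) (XA a b)) = mget H.
Proof.
apply: FunctionalExtensionality.functional_extensionality => a.
apply: FunctionalExtensionality.functional_extensionality => b.
by rewrite /XA DvX /pair_coord /idxA row_mxEl mxvecE.
Qed.
Lemma dvfunB x (H K : 'M[R]_3) : (fun a b => Dv x (fun i => pair_coord H K 0 i) (XB a b)) = mget K.
Proof.
apply: FunctionalExtensionality.functional_extensionality => a.
apply: FunctionalExtensionality.functional_extensionality => b.
by rewrite /XB DvX /pair_coord /idxB row_mxEr mxvecE.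
Qed.

Definition dirA (N : 'M[R]_3) (l : nat) : 'M[R]_3 := nth 0 [:: H1 N; H2 N; H3 N] l.
Definition dirM (A0 B0 : 'M[R]_3) : 'M[R]_(NN, 6) :=
  \matrix_(i < NN, l < 6)
    pair_coord (if (l < 3)%N then dirA A0 l else 0)
               (if (l < 3)%N then 0 else dirA B0 (l - 3)) 0 i.

Lemma JX (A0 B0 : 'M[R]_3) : inC A0 -> inC B0 ->
  (\matrix_(k < 6, i < NN) (mderiv i (fpoly k)).@[fun j => pair_coord A0 B0 0 j])
    *m dirM A0 B0 = 1%:M.
Proof.
move=> cA cB; apply/matrixP => k l; rewrite !mxE.
set x := (fun j => pair_coord A0 B0 0 j).
rewrite (_ : \sum_j _ = Dv x (fun i => pair_coord (if (l < 3)%N then dirA A0 l else 0)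
               (if (l < 3)%N then 0 else dirA B0 (l - 3)) 0 i) (fpoly k)); last first.
  by rewrite /Dv; apply: eq_bigr => i _; rewrite !mxE.
case: k => [[|[|[|[|[|[|k]]]]]] Hk] //; case: l => [[|[|[|[|[|[|l]]]]]] Hl] //=;
  rewrite /fpoly /= ?Dv_q1 ?Dv_q2 ?Dv_q3 /x ?evfunA ?evfunB ?dvfunA ?dvfunB /dirA /=.
all: first [ exact: d11 cA | exact: d12 cA | exact: d13 cA | exact: d21 cA | exact: d22 cA
  | exact: d23 cA | exact: d31 cA | exact: d32 cA | exact: d33 cA
  | exact: d11 cB | exact: d12 cB | exact: d13 cB | exact: d21 cB | exact: d22 cB
  | exact: d23 cB | exact: d31 cB | exact: d32 cB | exact: d33 cB
  | exact: d10 | exact: d20 | exact: d30 | idtac ].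
Qed.
End Main.



Lemma trMF_sq (T : comNzRingType) (e : nat -> nat -> T) : trMF e e = trF e ^+ 2 - s2F e *+ 2.
Proof. rewrite /trMF /trF /s2F; ring. Qed.

Section Main2.
Variable R : realType.
Implicit Types A B : 'M[R]_3.
Lemma cube_mx A : A ^+ 3 = A *m A *m A.
Proof. by rewrite exprS expr2; exact: mulmxA. Qed.

Lemma homq A : \det A = 1 -> A ^+ 3 = 1 ->
  [/\ q1F (mget A) = 0, q2F (mget A) = 0 & q3F (mget A) = 0].
Proof.
move=> dA; rewrite cube_mx => c3.
have ch := CH3 A; rewrite c3 -det3E dA scale1r in ch.
set t := trF (mget A) in ch *; set s := s2F (mget A) in ch *.
have M0 : t *: (A *m A) - s *: A = 0.
  by apply: (@addIr _ 1%:M); rewrite add0r -ch.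
have M1 : t *: A - s *: 1%:M = 0.
  have := congr1 (mulmx (A *m A)) M0.
  rewrite mulmxBr -!scalemxAr !mulmxA c3 mul1mx mulmx0 => h; exact: h.
have ent : forall a b, (a < 3)%N -> (b < 3)%N -> t * mget A a b = s * (a == b)%:R.
  move=> a b Ha Hb; have := congr1 (fun M => mget M a b) M1.
  by rewrite /= mgetB !mgetZ mget1 // /mget mxE => /eqP; rewrite subr_eq0 => /eqP.
have q1 : q1F (mget A) = 0 by rewrite /q1F -det3E dA subrr.
have [t0|tn0] := eqVneq t 0.
  have s0 : s = 0 by have := ent 0%N 0%N isT isT; rewrite t0 mul0r /= mulr1.
  split => //.
    by rewrite /q2F trMF_sq -/t -/s t0 s0; ring.
  by rewrite /q3F -/t t0 mul0r.
have off : forall a b, (a < 3)%N -> (b < 3)%N -> a != b -> mget A a b = 0.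
  move=> a b Ha Hb ab; have := ent a b Ha Hb; rewrite (negbTE ab) mulr0.
  by move/eqP; rewrite mulf_eq0 (negbTE tn0) => /eqP.
have dg : forall a, (a < 3)%N -> mget A a a = s / t.
  move=> a Ha; have := ent a a Ha Ha; rewrite eqxx mulr1 => <-.
  by rewrite mulrAC divff // mul1r.
have e01 := off 0%N 1%N isT isT isT. have e02 := off 0%N 2%N isT isT isT.
have e10 := off 1%N 0%N isT isT isT. have e12 := off 1%N 2%N isT isT isT.
have e20 := off 2%N 0%N isT isT isT. have e21 := off 2%N 1%N isT isT isT.
have d0 := dg 0%N isT. have d1 := dg 1%N isT. have d2 := dg 2%N isT.
have c1 : s / t = 1.
  move: dA; rewrite det3E /detF e01 e02 e10 e12 e20 e21 d0 d1 d2.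
  set c := s / t => h3.
  have h : c ^+ 3 = 1 by rewrite -h3; ring.
  have E : (c - 1) * (c ^+ 2 + c + 1) = c ^+ 3 - 1 by ring.
  rewrite h subrr in E; move/eqP: E; rewrite mulf_eq0 => /orP [/eqP/subr0_eq //|/eqP E].
  have : 0 < c ^+ 2 + c + 1 by nra.
  by rewrite E ltxx.
by split; rewrite ?q1 /q2F /q3F /trMF /trF ?e01 ?e02 ?e10 ?e12 ?e20 ?e21 ?d0 ?d1 ?d2 ?c1; ring.
Qed.

Lemma qhom A A0 : inC A0 ->
  (forall a, (a < 3)%N -> `|mget A a a - mget A0 a a| < 2^-1) ->
  q1F (mget A) = 0 -> q2F (mget A) = 0 -> q3F (mget A) = 0 -> inC A.
Proof.
move=> [t0 _ _] near h1 h2 h3.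
have n0 := near 0%N isT; have n1 := near 1%N isT; have n2 := near 2%N isT.
rewrite ltr_norml in n0; rewrite ltr_norml in n1; rewrite ltr_norml in n2.
move: t0; rewrite /trF => t0.
have tA : trF (mget A) = 0.
  move: h3; rewrite /q3F => /eqP; rewrite mulf_eq0 => /orP [/eqP //|/eqP].
  rewrite /trF => h. exfalso.
  case/andP: n0 => n0a n0b; case/andP: n1 => n1a n1b; case/andP: n2 => n2a n2b.
  have h' : mget A 0 0 + mget A 1 1 + mget A 2 2 = 3%:R by apply/eqP; rewrite -subr_eq0 h.
  lra.
have sA : s2F (mget A) = 0.
  move: h2; rewrite /q2F trMF_sq tA => h.
  have : s2F (mget A) *+ 2 = 0 by rewrite -h; ring.
  by rewrite -mulr_natr => /eqP; rewrite mulf_eq0 pnatr_eq0 orbF => /eqP.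
split => //.
by move: h1; rewrite /q1F => /eqP; rewrite subr_eq0 => /eqP.
Qed.

Lemma inC_hom A : inC A -> \det A = 1 /\ A ^+ 3 = 1.
Proof.
move=> c; split; first by case: c => _ _ d; rewrite det3E.
by rewrite cube_mx inC_cube.
Qed.

Lemma evq A B (k : 'I_6) : (fpoly R k).@[fun i => pair_coord A B 0 i] =
  nth 0 [:: q1F (mget A); q2F (mget A); q3F (mget A);
            q1F (mget B); q2F (mget B); q3F (mget B)] k.
Proof.
case: k => [[|[|[|[|[|[|k]]]]]] Hk] //=;
  rewrite /fpoly /= ?ev_q1 ?ev_q2 ?ev_q3 ?evfunA ?evfunB //.
Qed.

Lemma vanish (y : 'rV[R]_(3 * 3 + 3 * 3)) : HomVar y -> forall k, (fpoly R k).@[fun i => y 0 i] = 0.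
Proof.
move=> [A [B [-> dA dB tA tB]]] k; rewrite evq.
have [a1 a2 a3] := homq dA tA; have [b1 b2 b3] := homq dB tB.
by case: k => [[|[|[|[|[|[|k]]]]]] Hk] //=.
Qed.

Lemma nearA A B A0 B0 (e : R) :
  (forall i, `|pair_coord A B 0 i - pair_coord A0 B0 0 i| < e) ->
  (forall a, (a < 3)%N -> `|mget A a a - mget A0 a a| < e) /\
  (forall a, (a < 3)%N -> `|mget B a a - mget B0 a a| < e).
Proof.
move=> h; split => a _.
  by have := h (idxA a a); rewrite /pair_coord /idxA !row_mxEl !mxvecE.
by have := h (idxB a a); rewrite /pair_coord /idxB !row_mxEr !mxvecE.
Qed.

Lemma smooth_of_inC A0 B0 : inC A0 -> inC B0 -> smooth_point (@HomVar R) (pair_coord A0 B0).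
Proof.
move=> cA cB; split.
  have [dA tA] := inC_hom cA; have [dB tB] := inC_hom cB.
  by exists A0, B0.
exists 6%N, (@fpoly R); split.
- exact: vanish.
- apply/eqP; rewrite eqn_leq rank_leq_row /=.
  have := mxrankM_maxl (\matrix_(k < 6, i < 3 * 3 + 3 * 3)
     (mderiv i (fpoly R k)).@[fun j => pair_coord A0 B0 0 j]) (dirM A0 B0).
  by rewrite JX // mxrank1.
- exists 2^-1; first by rewrite invr_gt0 ltr0n.
  move=> y near.
  have ey : y = pair_coord (vec_mx (lsubmx y)) (vec_mx (rsubmx y)).
    by rewrite /pair_coord !vec_mxK hsubmxK.
  split; first by move=> hy; exact: vanish.
  move: near; rewrite ey => near H.
  have [nA nB] := nearA near.
  have q := fun k (Hk : (k < 6)%N) => H (Ordinal Hk).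
  have := q 0%N isT; have := q 1%N isT; have := q 2%N isT.
  have := q 3%N isT; have := q 4%N isT; have := q 5%N isT.
  rewrite !evq /= => b3 b2 b1 a3 a2 a1.
  have [dA tA] := inC_hom (qhom cA nA a1 a2 a3).
  have [dB tB] := inC_hom (qhom cB nB b1 b2 b3).
  by exists (vec_mx (lsubmx y)), (vec_mx (rsubmx y)).
Qed.
End Main2.



Section Real.
Variable R : realType.
Implicit Types M : 'M[R]_3.
Lemma cbrt_cube (x : R) : cbrt x ^+ 3 = x.
Proof.
have P : forall y : R, 0 <= y -> (y `^ 3^-1) ^+ 3 = y.
  move=> y y0; rewrite -powR_mulrn ?powR_ge0 // -powRrM mulVf ?pnatr_eq0 //.
  exact: powRr1.
rewrite /cbrt exprMn; case: sgrP => [->|h|h]; rewrite ?normr0 ?expr0n ?mul0r //.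
  by rewrite expr1n mul1r P // ltW.
rewrite P ?oppr_ge0 ?ltW //; ring.
Qed.

Lemma piSL_inC M : \det M != 0 -> M *m M *m M = \det M *: 1%:M -> \tr M = 0 -> inC (piSL M).
Proof.
move=> d0 c3 t0.
have c3d : cbrt (\det M) ^+ 3 = \det M := cbrt_cube _.
set c := cbrt (\det M) in c3d *.
have c0 : c != 0 by apply: contraNneq d0 => h; rewrite -c3d h expr0n.
have tN : trF (mget (piSL M)) = 0 by rewrite -tr3E /piSL -/c mxtraceZ t0 mulr0.
have dN : detF (mget (piSL M)) = 1.
  by rewrite -det3E /piSL -/c detZ exprVn c3d mulVf.
split=> //.
have cub : piSL M *m piSL M *m piSL M = 1%:M.
  rewrite -cube_mx /piSL -/c exprZn cube_mx c3 scalerA exprVn c3d mulVf // scale1r //.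
have ch := CH3 (piSL M).
rewrite cub tN dN scale0r sub0r scale1r in ch.
have sN : s2F (mget (piSL M)) *: piSL M = 0.
  apply/eqP; rewrite -oppr_eq0; apply/eqP.
  by apply: (@addIr _ 1%:M); rewrite add0r -ch.
have := congr1 determinant sN; rewrite detZ (det3E (piSL M)) dN mulr1 det0 => /eqP.
by rewrite expf_eq0 /= => /eqP.
Qed.

Lemma cube_ts M : trF (mget M) = 0 -> s2F (mget M) = 0 -> M *m M *m M = \det M *: 1%:M.
Proof. by move=> t s; rewrite CH3 t s !scale0r subr0 add0r det3E. Qed.

Lemma conj2 (P Q X Y : 'M[R]_3) : P *m Q = 1%:M ->
  (Q *m X *m P) *m (Q *m Y *m P) = Q *m (X *m Y) *m P.
Proof. by move=> PQ; rewrite !mulmxA -[Q *m X *m P *m Q]mulmxA PQ mulmx1. Qed.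

Lemma conj_ok (P X : 'M[R]_3) (k : R) : P \in unitmx -> k != 0 ->
  X *m X *m X = k *: 1%:M -> \tr X = 0 -> \det X = k ->
  let B := invmx P *m X *m P in
  [/\ \det B != 0, B *m B *m B = \det B *: 1%:M & \tr B = 0].
Proof.
move=> uP k0 c3 t0 d0 B.
have PQ : P *m invmx P = 1%:M by rewrite mulmxV.
have QP : invmx P *m P = 1%:M by rewrite mulVmx.
have dB : \det B = k.
  by rewrite /B !det_mulmx det_inv d0 mulrAC mulVf ?mul1r // -unitfE -unitmxE.
split.
- by rewrite dB.
- rewrite /B !conj2 // c3 dB -scalemxAr mulmx1 -scalemxAl QP //.
- by rewrite /B mxtrace_mulC mulmxA PQ mul1mx t0.
Qed.

Lemma inv_ok (Y : 'M[R]_3) : trF (mget Y) = 0 -> s2F (mget Y) = 0 -> \det Y != 0 ->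
  [/\ invmx Y *m invmx Y *m invmx Y = (\det Y)^-1 *: 1%:M, \tr (invmx Y) = 0
     & \det (invmx Y) = (\det Y)^-1].
Proof.
move=> t s d0.
have c3 := cube_ts t s.
have uY : Y \in unitmx by rewrite unitmxE unitfE.
have YZ : Y *m ((\det Y)^-1 *: (Y *m Y)) = 1%:M.
  by rewrite -scalemxAr mulmxA c3 scalerA mulVf // scale1r.
have XE : invmx Y = (\det Y)^-1 *: (Y *m Y).
  by rewrite -[invmx Y]mulmx1 -YZ mulmxA mulVmx // mul1mx.
split.
- rewrite XE -!cube_mx exprZn cube_mx.
  have -> : Y *m Y *m (Y *m Y) *m (Y *m Y) = (Y *m Y *m Y) *m (Y *m Y *m Y) by rewrite !mulmxA.
  rewrite c3 -scalemxAl mul1mx !scalerA; congr (_ *: _).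
  by field.
- by rewrite XE mxtraceZ tr2_E t s expr0n mul0rn subrr mulr0.
- by rewrite det_inv.
Qed.

Lemma mget_mx3 (a11 a12 a13 a21 a22 a23 a31 a32 a33 : R) i j : (i < 3)%N -> (j < 3)%N ->
  mget (mx3 a11 a12 a13 a21 a22 a23 a31 a32 a33) i j =
  nth 0 (nth [::] [:: [:: a11; a12; a13]; [:: a21; a22; a23]; [:: a31; a32; a33]] i) j.
Proof. by move=> Hi Hj; rewrite /mget /mx3 mxE !inordK. Qed.

Variables zt zb eps del : R.
Hypotheses (ht : -1 < zt < 1) (hb : -1 < zb < 1).

Lemma A_tr : trF (mget (A_Theta zt zb)) = 0.
Proof. by rewrite /trF /A_Theta !mget_mx3 //=; ring. Qed.
Lemma A_s2 : s2F (mget (A_Theta zt zb)) = 0.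
Proof. by rewrite /s2F /A_Theta !mget_mx3 //=; ring. Qed.
Lemma A_det : \det (A_Theta zt zb) != 0.
Proof.
rewrite det3E /detF /A_Theta !mget_mx3 //=.
have -> : (zt * zb - 1) * (1 - zt * zb) * 0 + zt * (1 - zt * zb) * (zt * zb - 1) * 0 +
   (zb - zt) * (zb - zt) * (1 - zt ^+ 2) - (zb - zt) * (1 - zt * zb) * 0 -
   zt * (1 - zt * zb) * (zb - zt) * 0 - (zt * zb - 1) * (zt * zb - 1) * (1 - zt ^+ 2)
  = - ((1 - zt ^+ 2) ^+ 2 * (1 - zb ^+ 2)) by ring.
rewrite oppr_eq0 mulf_eq0 negb_or expf_eq0 /=.
case/andP: ht => h1 h2; case/andP: hb => h3 h4.
by apply/andP; split; apply/negP => /eqP h; nra.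
Qed.
Lemma D_det : \det (D_Theta zt zb) != 0.
Proof.
rewrite det3E /detF /D_Theta !mget_mx3 //=.
have -> : 1 * 1 * 1 + - zt * (zt * zb) * - zb + - zb * - zt * (zt * zb) - - zb * 1 * - zb -
   - zt * - zt * 1 - 1 * (zt * zb) * (zt * zb) = (1 - zt ^+ 2) * (1 - zb ^+ 2) by ring.
case/andP: ht => h1 h2; case/andP: hb => h3 h4.
by rewrite mulf_eq0 negb_or; apply/andP; split; apply/negP => /eqP h; nra.
Qed.
Lemma S_det : \det (Sigma eps del) = 1.
Proof.
rewrite det3E /detF /Sigma !mget_mx3 //= /coshR /sinhR !expRN.
have h1 : expR eps != 0 by rewrite gt_eqF // expR_gt0.
have h2 : expR del != 0 by rewrite gt_eqF // expR_gt0.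
by field; rewrite h1 h2.
Qed.

End Real.

Lemma conj_ok2 (R : realType) (P Q X : 'M[R]_3) (k : R) : P *m Q = 1%:M -> Q *m P = 1%:M -> k != 0 ->
  X *m X *m X = k *: 1%:M -> \tr X = 0 -> \det X = k ->
  [/\ \det (Q *m X *m P) != 0, (Q *m X *m P) *m (Q *m X *m P) *m (Q *m X *m P)
        = \det (Q *m X *m P) *: 1%:M & \tr (Q *m X *m P) = 0].
Proof.
move=> PQ QP k0 c3 t0 d0.
have dB : \det (Q *m X *m P) = k.
  by rewrite !det_mulmx d0 mulrAC -det_mulmx QP det1 mul1r.
split.
- by rewrite dB.
- rewrite !conj2 // c3 dB -scalemxAr mulmx1 -scalemxAl QP //.
- by rewrite mxtrace_mulC mulmxA PQ mul1mx t0.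
Qed.

Lemma mgetT (R : realType) (M : 'M[R]_3) a b : mget (M^T) a b = mget M b a.
Proof. by rewrite /mget mxE. Qed.

Theorem lemma11p2 (R : realType) (zt zb eps del : R) :
  -1 < zt < 1 -> -1 < zb < 1 -> in_region eps del ->
  smooth_point (@HomVar R)
    (pair_coord (piSL (A_Theta zt zb)) (piSL (B_Theta zt zb eps del))).
Proof.
move=> ht hb _.
have tA := A_tr zt zb; have sA := A_s2 zt zb; have dA := A_det ht hb.
apply: smooth_of_inC.
  by apply: piSL_inC => //; [exact: cube_ts | rewrite tr3E].
set A := A_Theta zt zb in tA sA dA *.
have tAT : trF (mget A^T) = 0 by rewrite /trF !mgetT.
have sAT : s2F (mget A^T) = 0 by rewrite -sA /s2F !mgetT; ring.
have dAT : \det A^T != 0 by rewrite det_tr.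
have [c3X trX dX] := inv_ok tAT sAT dAT.
have uD : D_Theta zt zb \in unitmx by rewrite unitmxE unitfE (D_det ht hb).
have uS : Sigma eps del \in unitmx by rewrite unitmxE unitfE S_det oner_eq0.
set P := D_Theta zt zb *m Sigma eps del.
set Q := invmx (Sigma eps del) *m invmx (D_Theta zt zb).
have PQ : P *m Q = 1%:M.
  by rewrite /P /Q mulmxA -[_ *m Sigma eps del *m _]mulmxA mulmxV // mulmx1 mulmxV.
have QP : Q *m P = 1%:M.
  by rewrite /P /Q mulmxA -[_ *m invmx _ *m _]mulmxA mulVmx // mulmx1 mulVmx.
have EB : B_Theta zt zb eps del = Q *m invmx A^T *m P by rewrite /B_Theta /Q /P !mulmxA.
have k0 : (\det A^T)^-1 != 0 by rewrite invr_eq0.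
have [dB cB tB] := conj_ok2 PQ QP k0 c3X trX dX.
rewrite EB; exact: piSL_inC.
Qed.
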